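(* Let $\mathbf{E}\subseteq\mathbf{A}$ be finite symmetric integral relation algebras such that $\mathbf{A}$ is a special extension of $\mathbf{E}$. Let $a,b$ be distinct diversity atoms of $\mathbf{E}$ and let $u,v$ be diversity atoms of $\mathbf{C}_{\mathbf{E}}(\mathbf{A})$. If $u\le J(a,0)$ and $v\le J(b,0)$, then $u;v=J(a;b,0)$. In particular, if $a;b=0'$ then $u;v=0'$.
   Context: Relation algebras are in the sense of Tarski; $1'$ identity, $0'$ its complement, $;$ relative product; integral: $1'$ is an atom; symmetric: $x^{\smile}=x$; a diversity atom is an atom below $0'$. Special extension: $\mathbf{A}$ is a special extension of $\mathbf{E}$ if for all diversity atoms $a,b,c$ of $\mathbf{E}$: (1) if not $a=b=c$ and $a;b\ge c$, then $x;y\ge c$ whenever $x,y$ are atoms of $\mathbf{A}$ with $x\le a$, $y\le b$; (2) if $a;a\ge a$ then $x;y\cdot a\ne0$ whenever $x,y$ are atoms of $\mathbf{A}$ below $a$. The algebra $\mathbf{C}_{\mathbf{E}}(\mathbf{A})$: for each atom $x$ of $\mathbf{A}$ let $c(x)$ be the atom of $\mathbf{E}$ with $x\le c(x)$; $T(i,j,k)$ iff $(i\le j=k)$ or $(j\le k=i)$ or $(k\le i=j)$. Atoms: $1'$ and $x^{(i)}$ for diversity atoms $x$ of $\mathbf{A}$ and $i\in\omega$. $C$ is the set of all permutations of $(1',1',1')$, $(1',x^{(i)},x^{(i)})$, and $(x^{(i)},y^{(j)},z^{(k)})$ with $x;y\ge z$ in $\mathbf{A}$ and ($c(x)=c(y)=c(z)\Rightarrow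 T(i,j,k)$). $\mathbf{C}_{\mathbf{E}}(\mathbf{A})$ is the algebra of all sets of atoms with set Boolean operations, identity $\{1'\}$ (so its diversity element $0'$ is the set of all $x^{(i)}$), converse the identity map, and $X;Y=\{w:\exists u\in X,\exists v\in Y,(u,v,w)\in C\}$. For $a\in\mathbf{A}$, $n\in\omega$, $J(a,n)$ is the join of all $x^{(i)}$ with $x$ a diversity atom of $\mathbf{A}$, $x\le a$, $n\le i$, together with $1'$ if $1'\le a$. *)

(* Defs.v *)
From mathcomp Require Import all_boot all_order.
Set Implicit Arguments. Unset Strict Implicit. Unset Printing Implicit Defensive.

(* Tarski's axioms: Huntington's axiomatization of Boolean algebras on
   (ra_join, complement), plus the relation-algebra axioms for ; , converse, 1'. *)
Record RA (T : finType) := MkRA {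
  ra_join : T -> T -> T;
  ra_compl : T -> T;
  ra_comp : T -> T -> T;
  ra_conv : T -> T;
  ra_one : T;
  join_comm : forall x y, ra_join x y = ra_join y x;
  join_assoc : forall x y z, ra_join (ra_join x y) z = ra_join x (ra_join y z);
  huntington : forall x y,
    ra_join (ra_compl (ra_join (ra_compl x) y)) (ra_compl (ra_join (ra_compl x) (ra_compl y))) = x;
  comp_assoc : forall x y z, ra_comp (ra_comp x y) z = ra_comp x (ra_comp y z);
  comp_distr : forall x y z, ra_comp (ra_join x y) z = ra_join (ra_comp x z) (ra_comp y z);
  comp_one : forall x, ra_comp x ra_one = x;
  conv_inv : forall x, ra_conv (ra_conv x) = x;
  conv_join : forall x y, ra_conv (ra_join x y) = ra_join (ra_conv x) (ra_conv y);
  conv_comp : forall x y, ra_conv (ra_comp x y) = ra_comp (ra_conv y) (ra_conv x);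
  tarski : forall x y, ra_join (ra_comp (ra_conv x) (ra_compl (ra_comp x y))) (ra_compl y) = ra_compl y
}.

Section RADefs.
Variables (T : finType) (A : RA T).

Definition ra_meet (x y : T) : T := ra_compl A (ra_join A (ra_compl A x) (ra_compl A y)).
Definition ra_zero : T := ra_compl A (ra_join A (ra_one A) (ra_compl A (ra_one A))).
Definition diversity : T := ra_compl A (ra_one A).
Definition ra_le (x y : T) : bool := ra_join A x y == y.

Definition ra_atom (x : T) : bool := (x != ra_zero) && [forall y, ra_le y x ==> (y == ra_zero) || (y == x)].
Definition ra_divatom (x : T) : bool := ra_atom x && ra_le x diversity.

Definition symmetric_RA : Prop := forall x, ra_conv A x = x.
Definition integral_RA : Prop := ra_atom (ra_one A).

Definition subalgebra (E : {set T}) : Prop :=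
  [/\ ra_one A \in E,
      forall x y, x \in E -> y \in E -> ra_join A x y \in E,
      forall x, x \in E -> ra_compl A x \in E,
      forall x y, x \in E -> y \in E -> ra_comp A x y \in E
    & forall x, x \in E -> ra_conv A x \in E].

Definition Eatom (E : {set T}) (e : T) : bool :=
  [&& e \in E, e != ra_zero & [forall f, (f \in E) && ra_le f e ==> (f == ra_zero) || (f == e)]].
Definition Edivatom (E : {set T}) (e : T) : bool := Eatom E e && ra_le e diversity.

Definition special_ext (E : {set T}) : Prop :=
  (forall a b c, Edivatom E a -> Edivatom E b -> Edivatom E c ->
     ~ (a = b /\ b = c) -> ra_le c (ra_comp A a b) ->
     forall x y, ra_atom x -> ra_atom y -> ra_le x a -> ra_le y b -> ra_le c (ra_comp A x y))
  /\
  (forall a, Edivatom E a -> ra_le a (ra_comp A a a) ->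
     forall x y, ra_atom x -> ra_atom y -> ra_le x a -> ra_le y a -> ra_meet (ra_comp A x y) a != ra_zero).

Definition cE (E : {set T}) (x : T) : option T := [pick e | Eatom E e && ra_le x e].

Definition Tpred (i j k : nat) : Prop :=
  ((i <= j) /\ j = k) \/ ((j <= k) /\ k = i) \/ ((k <= i) /\ i = j).

(* atoms of C_E(A): 1' and x^(i) *)
Inductive CAtom := CId | CDiv of T & nat.

Definition Cvalid (w : CAtom) : Prop :=
  match w with CId => True | CDiv x _ => ra_divatom x end.

Definition Cbase (E : {set T}) (u v w : CAtom) : Prop :=
  match u, v, w with
  | CId, CId, CId => True
  | CId, CDiv x i, CDiv x' i' => ra_divatom x /\ x = x' /\ i = i'
  | CDiv x i, CDiv y j, CDiv z k =>
      [/\ ra_divatom x, ra_divatom y, ra_divatom z, ra_le z (ra_comp A x y) &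
          (cE E x = cE E y /\ cE E y = cE E z -> Tpred i j k)]
  | _, _, _ => False
  end.

Definition Ccyc (E : {set T}) (u v w : CAtom) : Prop :=
  Cbase E u v w \/ Cbase E u w v \/ Cbase E v u w \/
  Cbase E v w u \/ Cbase E w u v \/ Cbase E w v u.

(* elements of C_E(A): sets of atoms *)
Definition CSet := CAtom -> Prop.
Definition Cle (X Y : CSet) : Prop := forall w, X w -> Y w.
Definition Ceq (X Y : CSet) : Prop := forall w, X w <-> Y w.
Definition Celem (X : CSet) : Prop := Cle X Cvalid.
Definition Cempty (X : CSet) : Prop := forall w, ~ X w.
Definition Ccomp (E : {set T}) (X Y : CSet) : CSet :=
  fun w => exists u v, X u /\ Y v /\ Ccyc E u v w.
Definition Cdiversity : CSet :=
  fun w => match w with CId => False | CDiv x _ => ra_divatom x end.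
Definition Catom (X : CSet) : Prop :=
  [/\ Celem X, ~ Cempty X &
      forall W, Celem W -> Cle W X -> Cempty W \/ Ceq W X].
Definition Cdivatom (X : CSet) : Prop := Catom X /\ Cle X Cdiversity.

Definition J (a : T) (n : nat) : CSet :=
  fun w => match w with
           | CId => ra_le (ra_one A) a
           | CDiv x i => ra_divatom x /\ ra_le x a /\ n <= i
           end.

End RADefs.

(* Main.v *)
Require Import Defs.
From mathcomp Require Import all_boot all_order.
From Stdlib Require Import Classical.
Set Implicit Arguments. Unset Strict Implicit.
Lemma jCA T (A : RA T) x y z : ra_join A x (ra_join A y z) = ra_join A y (ra_join A x z).
Proof. by rewrite -!join_assoc (join_comm A x y). Qed.

Lemma jACA T (A : RA T) x y z w : ra_join A (ra_join A x y) (ra_join A z w) = ra_join A (ra_join A x z) (ra_join A y w).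
Proof. by rewrite !join_assoc (jCA A y z w). Qed.

Lemma shuf1 T (A : RA T) a b c d p q r :
  ra_join A b a = p -> ra_join A b d = q -> ra_join A d c = q -> ra_join A a c = r ->
  ra_join A p q = ra_join A r q.
Proof.
move=> H1 H2 H3 H4; rewrite -H1 -H4.
have -> : ra_join A (ra_join A b a) q = ra_join A (ra_join A b a) (ra_join A d c) by rewrite H3.
rewrite -H2.
by rewrite jACA join_comm.
Qed.

Lemma L1 T (A : RA T) x :
  ra_join A x (ra_compl A x) = ra_join A (ra_compl A (ra_compl A x)) (ra_compl A x).
Proof.
have h1 := huntington A x (ra_compl A (ra_compl A x)).
have h2 := huntington A (ra_compl A x) (ra_compl A x).
have h2' := huntington A (ra_compl A x) (ra_compl A (ra_compl A x)).
have h3 := huntington A (ra_compl A (ra_compl A x)) (ra_compl A x).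
rewrite (join_comm A (ra_compl A (ra_compl A x)) (ra_compl A x)) in h2.
rewrite (join_comm A (ra_compl A (ra_compl A (ra_compl A x))) (ra_compl A x)) in h3.
rewrite (join_comm A (ra_compl A (ra_compl A x)) (ra_compl A (ra_compl A (ra_compl A x)))) in h2'.
exact: (shuf1 h1 h2 h2' h3).
Qed.

Lemma L2 T (A : RA T) x : ra_compl A (ra_compl A x) = x.
Proof.
have h1 := huntington A x (ra_compl A (ra_compl A x)).
have h3 := huntington A (ra_compl A (ra_compl A x)) (ra_compl A x).
have e := L1 A (ra_compl A x).
rewrite (join_comm A (ra_compl A (ra_compl A (ra_compl A x))) (ra_compl A x)) -e in h3.
by rewrite -h3 join_comm.
Qed.

Lemma Hn T (A : RA T) x y :
  ra_join A (ra_compl A (ra_join A x y)) (ra_compl A (ra_join A x (ra_compl A y))) = ra_compl A x.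
Proof. by have := huntington A (ra_compl A x) y; rewrite L2. Qed.

Lemma shuf2 T (A : RA T) P Q R S :
  ra_join A (ra_join A P Q) (ra_join A R S) = ra_join A (ra_join A S Q) (ra_join A R P).
Proof.
by rewrite [RHS]join_comm (join_comm A R P) (join_comm A S Q) jACA.
Qed.

Lemma L3 T (A : RA T) x y : ra_join A x (ra_compl A x) = ra_join A y (ra_compl A y).
Proof.
set n := ra_compl A.
have e1 : ra_join A x (n x) = ra_join A (ra_join A (n (ra_join A (n x) y)) (n (ra_join A (n x) (n y))))
   (ra_join A (n (ra_join A x y)) (n (ra_join A x (n y)))) by rewrite huntington Hn.
have e2 : ra_join A y (n y) = ra_join A (ra_join A (n (ra_join A (n y) x)) (n (ra_join A (n y) (n x))))
   (ra_join A (n (ra_join A y x)) (n (ra_join A y (n x)))) by rewrite huntington Hn.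
rewrite e1 e2 (join_comm A (n y) x) (join_comm A (n y) (n x)) (join_comm A y x) (join_comm A y (n x)).
exact: shuf2.
Qed.

Definition top T (A : RA T) := ra_join A (ra_one A) (ra_compl A (ra_one A)).

Lemma jxnx T (A : RA T) x : ra_join A x (ra_compl A x) = top A.
Proof. exact: L3. Qed.
Lemma jnxx T (A : RA T) x : ra_join A (ra_compl A x) x = top A.
Proof. by rewrite join_comm jxnx. Qed.
Lemma ntop T (A : RA T) : ra_compl A (top A) = ra_zero A.
Proof. by []. Qed.
Lemma nzero T (A : RA T) : ra_compl A (ra_zero A) = top A.
Proof. by rewrite -ntop L2. Qed.
Lemma top0 T (A : RA T) : ra_join A (top A) (ra_zero A) = top A.
Proof. by rewrite -ntop jxnx. Qed.
Lemma zerotop T (A : RA T) : ra_join A (ra_zero A) (top A) = top A.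
Proof. by rewrite join_comm top0. Qed.

Lemma zz T (A : RA T) : ra_join A (ra_zero A) (ra_zero A) = ra_zero A.
Proof.
set z := ra_zero A.
have hA := huntington A (ra_compl A (ra_join A z z)) (top A).
rewrite L2 join_assoc zerotop zerotop ntop -/z in hA.
have hB := huntington A (top A) (top A).
rewrite ntop -/z zerotop ntop -/z in hB.
have hC := huntington A (top A) (ra_compl A (ra_join A z z)).
rewrite ntop -/z L2 hB ntop -/z in hC.
rewrite join_assoc hC in hA.
by rewrite -(L2 A (ra_join A z z)) -hA ntop.
Qed.

Lemma j0 T (A : RA T) x : ra_join A x (ra_zero A) = x.
Proof.
have h := huntington A x x; rewrite jnxx ntop in h.
by rewrite -h join_comm -join_assoc zz.
Qed.
Lemma j0l T (A : RA T) x : ra_join A (ra_zero A) x = x.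
Proof. by rewrite join_comm j0. Qed.

Lemma jj T (A : RA T) x : ra_join A x x = x.
Proof.
have h := Hn A x (ra_compl A x); rewrite L2 jxnx ntop j0l in h.
by rewrite -(L2 A (ra_join A x x)) h L2.
Qed.

Lemma jtop T (A : RA T) x : ra_join A x (top A) = top A.
Proof. by rewrite -(jxnx A x) -join_assoc jj. Qed.

Lemma leE T (A : RA T) x y : ra_le A x y = (ra_join A x y == y).
Proof. by []. Qed.

Lemma le_refl T (A : RA T) x : ra_le A x x.
Proof. by rewrite leE jj. Qed.

Lemma le_trans T (A : RA T) x y z : ra_le A x y -> ra_le A y z -> ra_le A x z.
Proof. rewrite !leE => /eqP h1 /eqP h2. by rewrite -h2 -join_assoc h1. Qed.

Lemma le_anti T (A : RA T) x y : ra_le A x y -> ra_le A y x -> x = y.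
Proof. rewrite !leE => /eqP h1 /eqP h2. by rewrite -h1 join_comm h2. Qed.

Lemma le_jl T (A : RA T) x y : ra_le A x (ra_join A x y).
Proof. by rewrite leE -join_assoc jj. Qed.
Lemma le_jr T (A : RA T) x y : ra_le A y (ra_join A x y).
Proof. by rewrite join_comm le_jl. Qed.

Lemma le_lub T (A : RA T) x y z : ra_le A x z -> ra_le A y z -> ra_le A (ra_join A x y) z.
Proof. rewrite !leE => /eqP h1 /eqP h2. by rewrite join_assoc h2 h1. Qed.

Lemma le0 T (A : RA T) x : ra_le A (ra_zero A) x.
Proof. by rewrite leE j0l. Qed.
Lemma le_top T (A : RA T) x : ra_le A x (top A).
Proof. by rewrite leE jtop. Qed.

Lemma le0_eq T (A : RA T) x : ra_le A x (ra_zero A) -> x = ra_zero A.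
Proof. by rewrite leE j0 => /eqP. Qed.

Lemma le_compl T (A : RA T) x y : ra_le A x y -> ra_le A (ra_compl A y) (ra_compl A x).
Proof.
rewrite leE => /eqP h.
have e := Hn A x y; rewrite h in e.
by rewrite -e leE -join_assoc jj.
Qed.

Lemma le_complE T (A : RA T) x y : ra_le A (ra_compl A y) (ra_compl A x) = ra_le A x y.
Proof.
apply/idP/idP; last exact: le_compl.
by move/le_compl; rewrite !L2.
Qed.

Lemma le_ncompl T (A : RA T) x : ra_le A x (ra_compl A x) -> x = ra_zero A.
Proof.
rewrite leE jxnx => /eqP h. by rewrite -(L2 A x) -h ntop.
Qed.

Lemma meetC T (A : RA T) x y : ra_meet A x y = ra_meet A y x.
Proof. by rewrite /ra_meet join_comm. Qed.

Lemma meet_l T (A : RA T) x y : ra_le A (ra_meet A x y) x.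
Proof.
have h := huntington A x y.
by rewrite leE -{2}h /ra_meet -join_assoc join_comm -join_assoc jj join_comm h.
Qed.
Lemma meet_r T (A : RA T) x y : ra_le A (ra_meet A x y) y.
Proof. by rewrite meetC meet_l. Qed.

Lemma meet_glb T (A : RA T) x y z : ra_le A z x -> ra_le A z y -> ra_le A z (ra_meet A x y).
Proof.
move=> h1 h2; rewrite /ra_meet -le_complE L2.
by apply: le_lub; rewrite le_complE.
Qed.

Lemma meet0_le T (A : RA T) a b : ra_meet A b a = ra_zero A -> ra_le A b (ra_compl A a).
Proof.
move=> h; have e := huntington A b (ra_compl A a).
rewrite L2 -/(ra_meet A b a) h j0l in e.
rewrite -e le_complE; exact: le_jr.
Qed.
Lemma compC T (A : RA T) x y : symmetric_RA A -> ra_comp A x y = ra_comp A y x.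
Proof. move=> hs; by have := conv_comp A x y; rewrite !hs. Qed.

Lemma comp_mono_l T (A : RA T) x a y : ra_le A x a -> ra_le A (ra_comp A x y) (ra_comp A a y).
Proof. rewrite leE => /eqP h; by rewrite -h comp_distr le_jl. Qed.

Lemma comp_mono_r T (A : RA T) x a y : symmetric_RA A ->
  ra_le A x a -> ra_le A (ra_comp A y x) (ra_comp A y a).
Proof. move=> hs h; rewrite !(compC y _ hs); exact: comp_mono_l. Qed.

Lemma tarski_sym T (A : RA T) x y : symmetric_RA A ->
  ra_le A (ra_comp A x (ra_compl A (ra_comp A x y))) (ra_compl A y).
Proof. move=> hs; by rewrite leE -{1}(hs x) tarski. Qed.

Lemma atom_split T (A : RA T) z p : ra_atom A z -> ra_le A z p \/ ra_le A z (ra_compl A p).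
Proof.
case/andP=> _ /forallP /(_ (ra_meet A z p)) /implyP /(_ (meet_l _ _ _)) /orP [/eqP h|/eqP h].
  by right; apply: meet0_le.
by left; rewrite -h meet_r.
Qed.

Lemma atom_nz T (A : RA T) z : ra_atom A z -> z <> ra_zero A.
Proof. by case/andP=> /eqP. Qed.

Lemma cycleRA T (A : RA T) x y z : symmetric_RA A -> ra_atom A z -> y <> ra_zero A ->
  ra_le A y (ra_comp A x z) -> ra_le A z (ra_comp A x y).
Proof.
move=> hs az ny hy; case: (atom_split (ra_comp A x y) az) => // h.
have := le_trans hy (le_trans (comp_mono_r x hs h) (tarski_sym x y hs)).
by move/le_ncompl.
Qed.

Lemma no_id T (A : RA T) a b : symmetric_RA A -> integral_RA A ->
  ra_le A b (ra_compl A a) -> ~~ ra_le A (ra_one A) (ra_comp A a b).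
Proof.
move=> hs hi hb; apply/negP => h1.
have h2 := le_trans h1 (comp_mono_r a hs hb).
rewrite -{2}(comp_one A a) in h2.
have := le_trans h2 (tarski_sym a (ra_one A) hs).
by move=> h; apply: (atom_nz hi); apply: le_ncompl h.
Qed.

Lemma inE_compl T (A : RA T) E x : subalgebra A E -> x \in E -> ra_compl A x \in E.
Proof. by case=> _ _ h _ _ /h. Qed.
Lemma inE_join T (A : RA T) E x y : subalgebra A E -> x \in E -> y \in E -> ra_join A x y \in E.
Proof. by case=> _ h _ _ _; apply: h. Qed.
Lemma inE_meet T (A : RA T) E x y : subalgebra A E -> x \in E -> y \in E -> ra_meet A x y \in E.
Proof. move=> hE hx hy; rewrite /ra_meet; apply: inE_compl => //; apply: inE_join => //; exact: inE_compl. Qed.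
Lemma inE_top T (A : RA T) E : subalgebra A E -> top A \in E.
Proof. move=> hE; case: (hE) => h1 _ _ _ _. apply: inE_join => //; exact: inE_compl. Qed.
Lemma inE_comp T (A : RA T) E x y : subalgebra A E -> x \in E -> y \in E -> ra_comp A x y \in E.
Proof. by case=> _ _ _ h _; apply: h. Qed.
Lemma inE_div T (A : RA T) E : subalgebra A E -> diversity A \in E.
Proof. move=> hE; case: (hE) => h1 _ _ _ _; exact: inE_compl. Qed.

Lemma Eatom_disj T (A : RA T) E a b : subalgebra A E -> Eatom A E a -> Eatom A E b -> a <> b ->
  ra_le A b (ra_compl A a).
Proof.
move=> hE /and3P [aE a0 /forallP ha] /and3P [bE b0 /forallP hb] ab.
have := ha (ra_meet A a b); rewrite inE_meet // meet_l /= => /orP [/eqP h|/eqP h].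
  by apply: meet0_le; rewrite meetC.
have := hb a; rewrite aE -{1}h meet_r /= => /orP [/eqP h'|/eqP h'].
  by move: a0; rewrite h' eqxx.
by case: ab.
Qed.

Lemma atom_uniq T (A : RA T) E x a b : subalgebra A E -> x <> ra_zero A ->
  Eatom A E a -> Eatom A E b -> ra_le A x a -> ra_le A x b -> a = b.
Proof.
move=> hE x0 ha hb xa xb; case: (eqVneq a b) => // /eqP ab.
have h := le_trans xb (Eatom_disj hE ha hb ab).
rewrite -le_complE L2 in h.
by exfalso; apply: x0; apply: le_ncompl; exact: le_trans xa h.
Qed.

Lemma Emin T (A : RA T) E z : subalgebra A E -> ra_atom A z ->
  exists c, [/\ Eatom A E c, ra_le A z c & forall g, g \in E -> ra_le A z g -> ra_le A c g].
Proof.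
move=> hE az.
pose P := fun e => (e \in E) && ra_le A z e.
have Ptop : P (top A) by rewrite /P inE_top // le_top.
case: (arg_minnP (fun e => #|[pred f | ra_le A f e]|) Ptop) => c /andP [cE zc] Hmin.
have key : forall g, g \in E -> ra_le A z g -> ra_le A c g.
  move=> g gE zg.
  have Pm : P (ra_meet A c g) by rewrite /P inE_meet // meet_glb.
  have sub : [pred f | ra_le A f (ra_meet A c g)] \subset [pred f | ra_le A f c].
    by apply/subsetP => f; rewrite !inE => h; exact: le_trans h (meet_l _ _ _).
  have hc := Hmin _ Pm.
  have eqc : #|[pred f | ra_le A f (ra_meet A c g)]| = #|[pred f | ra_le A f c]|.
    by apply/eqP; rewrite eqn_leq hc subset_leq_card.
  have /(subset_cardP eqc) := sub => /(_ c); rewrite !inE le_refl => h.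
  exact: le_trans h (meet_r _ _ _).
exists c; split => //.
rewrite /Eatom cE /=; apply/andP; split.
  apply/eqP => c0; apply: (atom_nz az); apply: le0_eq; by rewrite -c0.
apply/forallP => f; apply/implyP => /andP [fE fc].
case: (atom_split f az) => h.
  by apply/orP; right; apply/eqP; apply: le_anti fc (key _ fE h).
apply/orP; left; apply/eqP; apply: le_ncompl.
exact: le_trans fc (key _ (inE_compl hE fE) h).
Qed.

Lemma Cdivatom_single T (A : RA T) (u : CSet T) : Cdivatom A u ->
  exists x i, ra_divatom A x /\ forall w, u w <-> w = CDiv x i.
Proof.
case=> [[hel hne hmin] hdiv].
have [w uw] : exists w, u w by apply: not_all_not_ex.
case: (hmin (fun w' => w' = w)).
- by move=> w' ->; exact: hel.
- by move=> w' ->.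
- by move=> /(_ w).
move=> heq; move: (hdiv w uw); case: w uw heq => // x i uw heq dx.
exists x, i; split => // w; split => [/heq //|->] ; exact: uw.
Qed.

Lemma divatom_atom T (A : RA T) x : ra_divatom A x -> ra_atom A x.
Proof. by case/andP. Qed.
Lemma divatom_div T (A : RA T) x : ra_divatom A x -> ra_le A x (diversity A).
Proof. by case/andP. Qed.

Theorem lemma3 (T : finType) (A : RA T) (E : {set T}) :
  symmetric_RA A -> integral_RA A -> subalgebra A E -> special_ext A E ->
  forall a b : T, Edivatom A E a -> Edivatom A E b -> a <> b ->
  forall u v : CSet T, Cdivatom A u -> Cdivatom A v ->
  Cle u (J A a 0) -> Cle v (J A b 0) ->
  Ceq (Ccomp A E u v) (J A (ra_comp A a b) 0) /\
  (ra_comp A a b = diversity A -> Ceq (Ccomp A E u v) (Cdiversity A)).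
Proof.
move=> hs hi hE [hsp _] a b hda hdb ab u v hu hv ua vb.
have ha : Eatom A E a by case/andP: hda.
have hb : Eatom A E b by case/andP: hdb.
have aE : a \in E by case/and3P: ha.
have bE : b \in E by case/and3P: hb.
case: (Cdivatom_single hu) => x [i [dx hux]].
case: (Cdivatom_single hv) => y [j [dy hvy]].
have [_ [xa _]] : J A a 0 (CDiv x i) by apply: ua; apply/hux.
have [_ [yb _]] : J A b 0 (CDiv y j) by apply: vb; apply/hvy.
have atx := divatom_atom dx; have aty := divatom_atom dy.
have x0 := atom_nz atx; have y0 := atom_nz aty.
have nxy : x <> y by move=> exy; apply: ab; apply: (atom_uniq hE x0 ha hb xa); rewrite exy.
have cneq : cE A E x <> cE A E y.
  rewrite /cE; case: pickP => [e /andP [ea xe] | H]; last by move: (H a); rewrite ha xa.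
  case: pickP => [f /andP [fa yf] | H]; last by move: (H b); rewrite hb yb.
  move=> [ef]; subst f.
  apply: ab; rewrite (atom_uniq hE x0 ha ea xa xe); exact: esym (atom_uniq hE y0 hb ea yb yf).
have noid := no_id hs hi (Eatom_disj hE ha hb ab).
have key : forall w, Ccomp A E u v w <-> Ccyc A E (CDiv x i) (CDiv y j) w.
  move=> w; split.
    by case=> [u0 [v0 [/hux -> [/hvy -> h]]]].
  by move=> h; exists (CDiv x i), (CDiv y j); split; [apply/hux|split; [apply/hvy|]].
have main : Ceq (Ccomp A E u v) (J A (ra_comp A a b) 0).
  move=> w; rewrite key; case: w => [|z k] /=.
    split; last by move=> h; rewrite h in noid.
    by case=> [//|[//|[//|[//|[[_ [e _]]|[_ [e _]]]]]]]; [case: nxy|case: nxy].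
  have toxy : ra_le A z (ra_comp A x y) -> ra_le A z (ra_comp A a b).
    move=> h; apply: (le_trans h); apply: (le_trans (comp_mono_l y xa)).
    exact: comp_mono_r.
  split.
    case=> [[_ _ dz h _]|[[_ dz _ h _]|[[_ _ dz h _]|[[_ dz _ h _]|[[dz _ _ h _]|[dz _ _ h _]]]]]];
      (split; [exact: dz|split; [apply: toxy|by []]]).
    + exact: h.
    + exact: (cycleRA hs (divatom_atom dz) y0 h).
    + by rewrite compC.
    + by rewrite compC //; apply: (cycleRA hs (divatom_atom dz) x0 h).
    + by apply: (cycleRA hs (divatom_atom dz) y0); rewrite compC.
    + by rewrite compC //; apply: (cycleRA hs (divatom_atom dz) x0); rewrite compC.
  case=> dz [zab _]; left.
  case: (Emin hE (divatom_atom dz)) => c [hc zc cmin].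
  have cab : ra_le A c (ra_comp A a b) by apply: cmin => //; exact: inE_comp.
  have cd : ra_le A c (diversity A) by apply: cmin; [exact: inE_div|exact: divatom_div].
  have hdc : Edivatom A E c by rewrite /Edivatom hc cd.
  have := hsp a b c hda hdb hdc (fun h => ab (proj1 h)) cab x y atx aty xa yb.
  move=> cxy; split => //; first exact: le_trans zc cxy.
  by case.
split => // hab w; rewrite main hab; case: w => [|z k] /=.
  split => // h; have := le_ncompl h; exact: atom_nz hi.
split; first by case.
by move=> dz; split => //; split => //; exact: divatom_div.
Qed.
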